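(* Let $N\ge1$, let $G$ be a group, and let $\mathbf r:G\to \mathrm U(N)$ be a unitary representation of $G$ acting on the $N$ Higgs doublets $\Phi_1,\dots,\Phi_N$ by $\Phi_i\mapsto \mathbf r(g)_{ij}\Phi_j$. Consider the general $N$-Higgs-doublet potential $V_H=\mu_{ij}(\Phi_i^\dagger\Phi_j)+z_{ij,kl}(\Phi_i^\dagger\Phi_j)(\Phi_k^\dagger\Phi_l)$ with coefficients satisfying $\mu_{ij}=\overline{\mu_{ji}}$ and $z_{ij,kl}=z_{kl,ij}=\overline{z_{ji,lk}}$. Then the number of independent (real) parameters of those potentials $V_H$ that are invariant under the action of $G$ (i.e. the real dimension of the subspace of coefficient pairs $(\mu,z)$ fixed by the induced action of $G$) equals the multiplicity of the trivial representation $\mathbf 1$ (the number of singlets) in the representation $$(\bar{\mathbf r}\otimes\mathbf r)\ \oplus\ \big[\mathrm{Sym}^2(\mathbf r)\otimes\mathrm{Sym}^2(\bar{\mathbf r})\big]\ \oplus\ \big[\mathrm{Alt}^2(\mathbf r)\otimes\mathrm{Alt}^2(\bar{\mathbf r})\big],$$ where the first summand is the contribution of $\mu_{ij}$ and the remaining two are the contribution of $z_{ij,kl}$.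
   Context: $\bar{\mathbf r}$ denotes the complex conjugate representation of $\mathbf r$; $\mathrm{Sym}^2(\mathbf r)$ and $\mathrm{Alt}^2(\mathbf r)$ denote the symmetric and antisymmetric parts of $\mathbf r\otimes\mathbf r$, so that $\mathbf r\otimes\mathbf r=\mathrm{Sym}^2(\mathbf r)\oplus\mathrm{Alt}^2(\mathbf r)$. All representations involved are unitary and hence decompose as direct sums of irreducible representations; the multiplicity of the trivial one-dimensional representation $\mathbf 1$ is the number of singlets. *)

(* Defs.v *)
(* Complex numbers are R[i] = complex R for a real closed
   field R (mathcomp-real-closed); taking R = the real numbers gives C. *)
From HB Require Import structures.
From mathcomp Require Import all_boot all_order all_algebra.
From mathcomp Require Import complex.
Set Implicit Arguments. Unset Strict Implicit. Unset Printing Implicit Defensive.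
Import Order.TTheory GRing.Theory Num.Theory.
Local Open Scope ring_scope.

Definition is_group (G : Type) (mul : G -> G -> G) (one : G) (inv : G -> G) :=
  [/\ forall x y z, mul x (mul y z) = mul (mul x y) z,
      forall x, mul one x = x, forall x, mul x one = x,
      forall x, mul (inv x) x = one & forall x, mul x (inv x) = one].

Definition unitary_rep (R : rcfType) (N : nat) (G : Type) (mul : G -> G -> G)
  (one : G) (r : G -> 'M[R[i]]_N) :=
  [/\ forall g h, r (mul g h) = r g *m r h,
      r one = 1%:M &
      forall g, (map_mx (fun x => x^*) (r g))^T *m r g = 1%:M].

(* d-dimensionality over a field K embedded in C via f, of a set S of
   finitely indexed families I -> C: S has a K-basis of d elements. *)
Definition dim_over (K : fieldType) (C : nzRingType) (f : K -> C) (I : finType)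
  (S : (I -> C) -> Prop) (d : nat) :=
  exists b : 'I_d -> I -> C,
    [/\ forall t, S (b t),
        forall a : 'I_d -> K,
          (forall x, \sum_(t < d) f (a t) * b t x = 0) -> forall t, a t = 0 &
        forall v, S v -> exists a : 'I_d -> K,
          forall x, v x = \sum_(t < d) f (a t) * b t x].

(* v (inl (i,j)) = mu_ij ;  v (inr (i,j,k,l)) = z_{ij,kl} *)
Definition coef_index (N : nat) : finType :=
  (('I_N * 'I_N) + ('I_N * 'I_N * 'I_N * 'I_N))%type.

Definition potential_coeffs (R : rcfType) (N : nat) (v : coef_index N -> R[i]) :=
  (forall i j : 'I_N, v (inl (i, j)) = (v (inl (j, i)))^*) /\
  (forall i j k l : 'I_N,
     v (inr (i, j, k, l)) = v (inr (k, l, i, j)) /\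
     v (inr (i, j, k, l)) = (v (inr (j, i, l, k)))^*).

(* Induced action of Phi_i |-> U_ij Phi_j on the coefficients:
   Phi_i^+ Phi_j |-> sum_ab conj(U_ia) U_jb Phi_a^+ Phi_b; the coefficients
   are fixed iff the transformed potential has the same coefficients. *)
Definition coeffs_fixed (R : rcfType) (N : nat) (U : 'M[R[i]]_N)
  (v : coef_index N -> R[i]) :=
  (forall a b : 'I_N,
     \sum_(i < N) \sum_(j < N) v (inl (i, j)) * (U i a)^* * U j b
     = v (inl (a, b))) /\
  (forall a b c d : 'I_N,
     \sum_(i < N) \sum_(j < N) \sum_(k < N) \sum_(l < N)
        v (inr (i, j, k, l)) * (U i a)^* * U j b * (U k c)^* * U l d
     = v (inr (a, b, c, d))).

Definition invariant_potentials (R : rcfType) (N : nat) (G : Type)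
  (r : G -> 'M[R[i]]_N) (v : coef_index N -> R[i]) :=
  potential_coeffs v /\ forall g, coeffs_fixed (r g) v.

(* inl (i,j)          : component e_i (x) e_j  of rbar (x) r
   inr (inl (i,k,j,l)): component e_i (x) e_k (x) e_j (x) e_l of r(x)r(x)rbar(x)rbar,
                        restricted to tensors symmetric in (i,k) and in (j,l)
   inr (inr (i,k,j,l)): same, restricted to tensors antisymmetric in (i,k)
                        and in (j,l). *)
Definition W_index (N : nat) : finType :=
  (('I_N * 'I_N) + (('I_N * 'I_N * 'I_N * 'I_N) + ('I_N * 'I_N * 'I_N * 'I_N)))%type.

Definition in_W (R : rcfType) (N : nat) (T : W_index N -> R[i]) :=
  (forall i k j l : 'I_N,
     T (inr (inl (i, k, j, l))) = T (inr (inl (k, i, j, l))) /\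
     T (inr (inl (i, k, j, l))) = T (inr (inl (i, k, l, j)))) /\
  (forall i k j l : 'I_N,
     T (inr (inr (i, k, j, l))) = - T (inr (inr (k, i, j, l))) /\
     T (inr (inr (i, k, j, l))) = - T (inr (inr (i, k, l, j)))).

(* action of U on W (matrix acting on column vectors: (U v)_i = sum_a U_ia v_a,
   conjugated on the rbar factors) *)
Definition W_act (R : rcfType) (N : nat) (U : 'M[R[i]]_N) (T : W_index N -> R[i])
  : W_index N -> R[i] :=
  fun x => match x with
  | inl (i, j) => \sum_(a < N) \sum_(b < N) (U i a)^* * U j b * T (inl (a, b))
  | inr (inl (i, k, j, l)) =>
      \sum_(a < N) \sum_(c < N) \sum_(b < N) \sum_(d < N)
        U i a * U k c * (U j b)^* * (U l d)^* * T (inr (inl (a, c, b, d)))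
  | inr (inr (i, k, j, l)) =>
      \sum_(a < N) \sum_(c < N) \sum_(b < N) \sum_(d < N)
        U i a * U k c * (U j b)^* * (U l d)^* * T (inr (inr (a, c, b, d)))
  end.

Definition W_fixed (R : rcfType) (N : nat) (G : Type) (r : G -> 'M[R[i]]_N)
  (T : W_index N -> R[i]) :=
  in_W T /\ forall g x, W_act (r g) T x = T x.

(* number of singlets (multiplicity of the trivial rep 1) in W, defined as
   dim_C Hom_G(1, W) = dim_C W^G *)
Definition singlet_count (R : rcfType) (N : nat) (G : Type)
  (r : G -> 'M[R[i]]_N) (m : nat) :=
  dim_over (@id R[i]) (W_fixed r) m.

(* Main.v *)
Require Import Defs.
From HB Require Import structures.
From mathcomp Require Import all_boot all_order all_algebra.
From mathcomp Require Import complex ring.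
From Stdlib Require Import Classical FunctionalExtensionality.
Import Order.TTheory GRing.Theory Num.Theory.
Local Open Scope ring_scope.

Lemma row_free_col_mx (K : fieldType) (d m : nat) (B : 'M[K]_(d, m)) (v : 'rV_m) :
  row_free B -> ~~ (v <= B)%MS -> row_free (col_mx B v).
Proof.
move=> fB nvB.
have lt : (B < B + v)%MS.
  rewrite ltmxE addsmxSl /=; apply: contra nvB => h.
  exact: submx_trans (addsmxSr B v) h.
have := rank_ltmx lt; rewrite /row_free (eqP fB) => h.
rewrite /row_free -(addsmxE B v).1 addn1 eqn_leq h andbT.
by rewrite (addsmxE B v).1; have := rank_leq_row (col_mx B v); move=> hh; apply: leq_trans hh _; by rewrite addn1.
Qed.

Lemma max_free (K : fieldType) (m : nat) (P : 'rV[K]_m -> Prop) :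
  exists d (B : 'M[K]_(d, m)), (forall t, P (row t B)) /\ row_free B /\
     forall v, P v -> (v <= B)%MS.
Proof.
pose Q d := exists B : 'M[K]_(d, m), (forall t, P (row t B)) /\ row_free B.
have Q0 : Q 0%N.
  exists 0; split; first by case.
  by rewrite /row_free eqn_leq rank_leq_row.
have Qle d : Q d -> (d <= m)%N.
  case=> B [_ fB]; move: (rank_leq_col B); by rewrite (eqP fB).
have key : forall k, (exists d, Q d /\ ~ Q (d + 1)%N) \/ Q k.
  elim=> [|k [IH|IH]]; [by right| by left|].
  case: (classic (Q k.+1)) => h; [by right | left; exists k; by rewrite addn1].
case: (key m.+1) => [[d [[B [PB fB]] nQ]]|/Qle]; last by rewrite ltnn.
exists d, B; do 2!split=> //.
move=> v Pv; case: (boolP (v <= B)%MS) => // nv; exfalso; apply: nQ.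
exists (col_mx B v); split.
- move=> t.
  rewrite -(splitK t); case: (split t) => j /=.
  + by rewrite rowKu.
  + rewrite rowKd (ord1 j); suff -> : row 0 v = v by []. by apply/rowP=> k; rewrite !mxE; congr (v _ _); apply: val_inj.
- exact: row_free_col_mx.
Qed.

Section C.
Variable R : rcfType.
Lemma cmulE (a p q : R) : (a%:C * (p +i* q))%C = ((a * p) +i* (a * q))%C :> R[i].
Proof. by apply/eqP; rewrite eq_complex /= !mul0r subr0 addr0 !eqxx. Qed.

Lemma csumE (d : nat) (a p q : 'I_d -> R) :
  \sum_(t < d) ((a t)%:C * (p t +i* q t))%C =
  ((\sum_(t < d) a t * p t) +i* (\sum_(t < d) a t * q t))%C :> R[i].
Proof.
elim: d a p q => [|d IH] a p q; first by rewrite !big_ord0.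
rewrite !big_ord_recr /= IH cmulE; done.
Qed.

Lemma cE (x : R[i]) : x = (complex.Re x +i* complex.Im x)%C. Proof. by case: x. Qed.

Definition ReC (x : R[i]) : R := complex.Re x.
Definition ImC (x : R[i]) : R := complex.Im x.

Lemma real_basis (I : finType) (S : (I -> R[i]) -> Prop) :
  exists d, exists b : 'I_d -> I -> R[i],
    [/\ forall t, S (b t),
        forall a : 'I_d -> R,
          (forall x, \sum_(t < d) real_complex R (a t) * b t x = 0) -> forall t, a t = 0 &
        forall v, S v -> exists a : 'I_d -> R,
          forall x, v x = \sum_(t < d) real_complex R (a t) * b t x].
Proof.
pose n := #|I|.
pose unreal (u : 'rV[R]_(n + n)) : I -> R[i] :=
  fun x => (u 0 (lshift n (enum_rank x)) +i* u 0 (rshift n (enum_rank x)))%C.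
pose realv (v : I -> R[i]) : 'rV[R]_(n + n) :=
  row_mx (\row_j ReC (v (enum_val j))) (\row_j ImC (v (enum_val j))).
have K v : unreal (realv v) = v.
  apply: functional_extensionality => x.
  by rewrite /unreal /realv row_mxEl row_mxEr !mxE enum_rankK /ReC /ImC -cE.
have [d [B [PB [fB sB]]]] := @max_free R _ (fun u => S (unreal u)).
exists d, (fun t => unreal (row t B)); split.
- exact: PB.
- move=> a ha t.
  have : (\row_t0 a t0) *m B = 0.
    apply/rowP=> j; rewrite !mxE.
    rewrite -(splitK j); case: (split j) => k /=.
    + have := ha (enum_val k); rewrite /unreal csumE enum_valK.
      by case=> h _; apply: (etrans _ h); apply: eq_bigr => s _; rewrite !mxE.

    + have := ha (enum_val k); rewrite /unreal csumE enum_valK.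
      by case=> _ h; apply: (etrans _ h); apply: eq_bigr => s _; rewrite !mxE.
  move/eqP; rewrite (mulmx_free_eq0 _ fB) => /eqP /rowP /(_ t).
  by rewrite !mxE.
- move=> v Sv.
  have : (realv v <= B)%MS by apply: sB; rewrite K.
  case/submxP=> a ha.
  exists (fun t => a 0 t) => x.
  rewrite csumE -(K v) /unreal.
  by rewrite ha !mxE; congr (_ +i* _)%C; apply: eq_bigr => s _; rewrite !mxE.
Qed.
End C.

Section Main.
Variables (R : rcfType) (N : nat).
Local Notation C := (R[i]).

Lemma sw_inner (F : 'I_N -> 'I_N -> 'I_N -> 'I_N -> C) :
  \sum_(a < N) \sum_(b < N) \sum_(c < N) \sum_(d < N) F a b c d =
  \sum_(a < N) \sum_(c < N) \sum_(b < N) \sum_(d < N) F a b c d.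
Proof. by apply: eq_bigr => a _; rewrite exchange_big. Qed.

Lemma sw_pairs (F : 'I_N -> 'I_N -> 'I_N -> 'I_N -> C) :
  \sum_(a < N) \sum_(b < N) \sum_(c < N) \sum_(d < N) F a b c d =
  \sum_(a < N) \sum_(b < N) \sum_(c < N) \sum_(d < N) F b a d c.
Proof.
rewrite exchange_big; apply: eq_bigr => a _; apply: eq_bigr => b _.
by rewrite exchange_big.
Qed.

Lemma S4D (F G : 'I_N -> 'I_N -> 'I_N -> 'I_N -> C) :
  \sum_(a < N) \sum_(b < N) \sum_(c < N) \sum_(d < N) (F a b c d + G a b c d) =
  \sum_(a < N) \sum_(b < N) \sum_(c < N) \sum_(d < N) F a b c d +
  \sum_(a < N) \sum_(b < N) \sum_(c < N) \sum_(d < N) G a b c d.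
Proof.
rewrite -big_split; apply: eq_bigr => a _; rewrite -big_split.
apply: eq_bigr => b _; rewrite -big_split; apply: eq_bigr => c _.
by rewrite -big_split.
Qed.

Lemma S4Z (x : C) (F : 'I_N -> 'I_N -> 'I_N -> 'I_N -> C) :
  \sum_(a < N) \sum_(b < N) \sum_(c < N) \sum_(d < N) (x * F a b c d) =
  x * \sum_(a < N) \sum_(b < N) \sum_(c < N) \sum_(d < N) F a b c d.
Proof.
rewrite mulr_sumr; apply: eq_bigr => a _; rewrite mulr_sumr.
apply: eq_bigr => b _; rewrite mulr_sumr; apply: eq_bigr => c _.
by rewrite mulr_sumr.
Qed.

Lemma S2D (F G : 'I_N -> 'I_N -> C) :
  \sum_(a < N) \sum_(b < N) (F a b + G a b) =
  \sum_(a < N) \sum_(b < N) F a b + \sum_(a < N) \sum_(b < N) G a b.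
Proof. rewrite -big_split; apply: eq_bigr => a _; by rewrite -big_split. Qed.

Lemma S2Z (x : C) (F : 'I_N -> 'I_N -> C) :
  \sum_(a < N) \sum_(b < N) (x * F a b) = x * \sum_(a < N) \sum_(b < N) F a b.
Proof. rewrite mulr_sumr; apply: eq_bigr => a _; by rewrite mulr_sumr. Qed.

Lemma S4conj (F : 'I_N -> 'I_N -> 'I_N -> 'I_N -> C) :
  (\sum_(a < N) \sum_(b < N) \sum_(c < N) \sum_(d < N) F a b c d)^* =
  \sum_(a < N) \sum_(b < N) \sum_(c < N) \sum_(d < N) (F a b c d)^*.
Proof.
rewrite rmorph_sum; apply: eq_bigr => a _; rewrite rmorph_sum.
apply: eq_bigr => b _; rewrite rmorph_sum; apply: eq_bigr => c _.
by rewrite rmorph_sum.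
Qed.

Lemma S2conj (F : 'I_N -> 'I_N -> C) :
  (\sum_(a < N) \sum_(b < N) F a b)^* = \sum_(a < N) \sum_(b < N) (F a b)^*.
Proof. rewrite rmorph_sum; apply: eq_bigr => a _; by rewrite rmorph_sum. Qed.

Definition phi (v : coef_index N -> C) : W_index N -> C :=
  fun x => match x with
  | inl (i, j) => v (inl (j, i))
  | inr (inl (i, k, j, l)) => v (inr (i, j, k, l)) + v (inr (k, j, i, l))
  | inr (inr (i, k, j, l)) => v (inr (i, j, k, l)) - v (inr (k, j, i, l))
  end.

Definition psi (T : W_index N -> C) : coef_index N -> C :=
  fun y => match y with
  | inl (i, j) => T (inl (j, i))
  | inr (i, j, k, l) => (T (inr (inl (i, k, j, l))) + T (inr (inr (i, k, j, l)))) / 2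
  end.

Definition sigma (v : coef_index N -> C) : coef_index N -> C :=
  fun y => match y with
  | inl (i, j) => (v (inl (j, i)))^*
  | inr (i, j, k, l) => (v (inr (j, i, l, k)))^*
  end.

Definition psym (v : coef_index N -> C) :=
  forall i j k l, v (inr (i, j, k, l)) = v (inr (k, l, i, j)).

Definition herm (v : coef_index N -> C) := forall y, sigma v y = v y.

Lemma pot_iff v : potential_coeffs v <-> psym v /\ herm v.
Proof.
split.
- case=> h1 h2; split; first by move=> i j k l; case: (h2 i j k l).
  by case=> [[i j]|[[[i j] k] l]] /=; [rewrite [RHS]h1 | case: (h2 i j k l) => _ ->].
- case=> h1 h2; split.
  + move=> i j; rewrite -(h2 (inl (i, j))) /=; done.
  + move=> i j k l; split; first exact: h1.
    by rewrite -(h2 (inr (i, j, k, l))).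
Qed.


Lemma S4B (F G : 'I_N -> 'I_N -> 'I_N -> 'I_N -> C) :
  \sum_(a < N) \sum_(b < N) \sum_(c < N) \sum_(d < N) (F a b c d - G a b c d) =
  \sum_(a < N) \sum_(b < N) \sum_(c < N) \sum_(d < N) F a b c d -
  \sum_(a < N) \sum_(b < N) \sum_(c < N) \sum_(d < N) G a b c d.
Proof.
rewrite -sumrB; apply: eq_bigr => a _; rewrite -sumrB.
apply: eq_bigr => b _; rewrite -sumrB; apply: eq_bigr => c _.
by rewrite -sumrB.
Qed.

Ltac e4 := apply: eq_bigr => ? _; apply: eq_bigr => ? _; apply: eq_bigr => ? _; apply: eq_bigr => ? _.
Ltac e2 := apply: eq_bigr => ? _; apply: eq_bigr => ? _.

Lemma F1fix (U V : 'M[C]_N) (hV : forall i a, V i a = (U a i)^*) v :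
  coeffs_fixed V v -> forall x, W_act U (phi v) x = phi v x.
Proof.
case=> h1 h2; case=> [[i j]|[[[[i k] j] l]|[[[i k] j] l]]] /=.
- apply: etrans _ (h1 j i); rewrite exchange_big; e2; rewrite !hV !conjCK; ring.
- transitivity (\sum_(a < N) \sum_(c < N) \sum_(b < N) \sum_(d < N)
      (U i a * U k c * (U j b)^* * (U l d)^* * v (inr (a, b, c, d))) +
    \sum_(a < N) \sum_(c < N) \sum_(b < N) \sum_(d < N)
      (U i a * U k c * (U j b)^* * (U l d)^* * v (inr (c, b, a, d)))).
    by rewrite -S4D; e4; ring.
  congr (_ + _).
  + apply: etrans _ (h2 i j k l); rewrite sw_inner; e4; rewrite !hV !conjCK; ring.
  + apply: etrans _ (h2 k j i l); rewrite exchange_big sw_inner; e4; rewrite !hV !conjCK; ring.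
- transitivity (\sum_(a < N) \sum_(c < N) \sum_(b < N) \sum_(d < N)
      (U i a * U k c * (U j b)^* * (U l d)^* * v (inr (a, b, c, d))) -
    \sum_(a < N) \sum_(c < N) \sum_(b < N) \sum_(d < N)
      (U i a * U k c * (U j b)^* * (U l d)^* * v (inr (c, b, a, d)))).
    by rewrite -S4B; e4; ring.
  congr (_ - _).
  + apply: etrans _ (h2 i j k l); rewrite sw_inner; e4; rewrite !hV !conjCK; ring.
  + apply: etrans _ (h2 k j i l); rewrite exchange_big sw_inner; e4; rewrite !hV !conjCK; ring.
Qed.


Lemma F3fix (U V : 'M[C]_N) (hV : forall i a, V i a = (U a i)^*) T :
  (forall x, W_act V T x = T x) -> coeffs_fixed U (psi T).
Proof.
move=> hT; split.
- move=> a b /=; apply: etrans _ (hT (inl (b, a))) => /=.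
  rewrite exchange_big; e2; rewrite !hV !conjCK; ring.
- move=> a b c d /=.
  transitivity (\sum_(i < N) \sum_(j < N) \sum_(k < N) \sum_(l < N)
      (2^-1 * (T (inr (inl (i, k, j, l))) * (U i a)^* * U j b * (U k c)^* * U l d)) +
    \sum_(i < N) \sum_(j < N) \sum_(k < N) \sum_(l < N)
      (2^-1 * (T (inr (inr (i, k, j, l))) * (U i a)^* * U j b * (U k c)^* * U l d))).
    by rewrite -S4D; e4; ring.
  rewrite !S4Z -(hT (inr (inl (a, c, b, d)))) -(hT (inr (inr (a, c, b, d)))) /=.
  rewrite mulrDl [_ / 2]mulrC [X in _ = _ + X]mulrC.
  congr (_ * _ + _ * _); rewrite [RHS]sw_inner; e4; rewrite !hV !conjCK; ring.
Qed.

Lemma F4fix (U : 'M[C]_N) v : coeffs_fixed U v -> coeffs_fixed U (sigma v).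
Proof.
case=> h1 h2; split.
- move=> a b /=; rewrite -(h1 b a) S2conj exchange_big; e2.
  rewrite !rmorphM /= !conjCK; ring.
- move=> a b c d /=; rewrite -(h2 b a d c) S4conj sw_pairs; e4.
  rewrite !rmorphM /= !conjCK; ring.
Qed.

Lemma Flin (U : 'M[C]_N) v w (x z : C) :
  coeffs_fixed U v -> coeffs_fixed U w ->
  coeffs_fixed U (fun y => x * v y + z * w y).
Proof.
case=> h1 h2 [k1 k2]; split.
- move=> a b.
  transitivity (\sum_(i < N) \sum_(j < N) (x * (v (inl (i, j)) * (U i a)^* * U j b)) +
                \sum_(i < N) \sum_(j < N) (z * (w (inl (i, j)) * (U i a)^* * U j b))).
    by rewrite -S2D; e2; ring.
  by rewrite !S2Z h1 k1.
- move=> a b c d.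
  transitivity (\sum_(i < N) \sum_(j < N) \sum_(k < N) \sum_(l < N)
      (x * (v (inr (i, j, k, l)) * (U i a)^* * U j b * (U k c)^* * U l d)) +
    \sum_(i < N) \sum_(j < N) \sum_(k < N) \sum_(l < N)
      (z * (w (inr (i, j, k, l)) * (U i a)^* * U j b * (U k c)^* * U l d))).
    by rewrite -S4D; e4; ring.
  by rewrite !S4Z h2 k2.
Qed.


Lemma phi_in_W v : psym v -> in_W (phi v).
Proof.
move=> ps; split=> i k j l /=.
- by split; [rewrite addrC | rewrite (ps i l k j) (ps k l i j) addrC].
- by split; [rewrite opprB | rewrite (ps i l k j) (ps k l i j) opprB].
Qed.

Lemma psi_phi v : psym v -> forall y, psi (phi v) y = v y.
Proof. by move=> ps [[i j]|[[[i j] k] l]] //=; field. Qed.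

Lemma phi_psi T : in_W T -> forall x, phi (psi T) x = T x.
Proof.
case=> hS hA [[i j]|[[[[i k] j] l]|[[[i k] j] l]]] //=.
- case: (hS k i j l) => -> _; case: (hA k i j l) => -> _; by field.
- case: (hS k i j l) => -> _; case: (hA k i j l) => -> _; by field.
Qed.

Lemma psym_psi T : in_W T -> psym (psi T).
Proof.
case=> hS hA i j k l /=.
case: (hS k i l j) => -> _; case: (hS i k l j) => _ ->.
case: (hA k i l j) => -> _; case: (hA i k l j) => _ ->.
by rewrite opprK.
Qed.

Definition sw (y : coef_index N) : coef_index N :=
  match y with
  | inl (i, j) => inl (j, i)
  | inr (i, j, k, l) => inr (j, i, l, k)
  end.

Lemma swK y : sw (sw y) = y. Proof. by case: y => [[i j]|[[[i j] k] l]]. Qed.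

Lemma sigmaE v y : sigma v y = (v (sw y))^*.
Proof. by case: y => [[i j]|[[[i j] k] l]]. Qed.

Lemma sigma_psym v : psym v -> psym (sigma v).
Proof. by move=> ps i j k l /=; rewrite ps. Qed.

Lemma psym_lin v w (x z : C) : psym v -> psym w -> psym (fun y => x * v y + z * w y).
Proof. by move=> p1 p2 i j k l; rewrite p1 p2. Qed.

Lemma sigma_lin v w (x z : C) y :
  sigma (fun y => x * v y + z * w y) y = x^* * sigma v y + z^* * sigma w y.
Proof. by rewrite !sigmaE rmorphD !rmorphM. Qed.

Lemma phi_sum (d : nat) (c : 'I_d -> C) (f : 'I_d -> coef_index N -> C) x :
  phi (fun y => \sum_(t < d) c t * f t y) x = \sum_(t < d) c t * phi (f t) x.
Proof.
case: x => [[i j]|[[[[i k] j] l]|[[[i k] j] l]]] /=.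
- done.
- by rewrite -big_split; apply: eq_bigr => t _; rewrite mulrDr.
- by rewrite -sumrB; apply: eq_bigr => t _; rewrite mulrBr.
Qed.

Lemma psi_sum (d : nat) (c : 'I_d -> C) (f : 'I_d -> W_index N -> C) y :
  psi (fun x => \sum_(t < d) c t * f t x) y = \sum_(t < d) c t * psi (f t) y.
Proof.
case: y => [[i j]|[[[i j] k] l]] /=.
- done.
- rewrite -big_split mulr_suml; apply: eq_bigr => t _ /=; ring.
Qed.

End Main.
Arguments phi {R N}.
Arguments psi {R N}.
Arguments sigma {R N}.
Arguments psym {R N}.
Arguments herm {R N}.
Arguments pot_iff {R N}.
Arguments F1fix {R N U V}.
Arguments F3fix {R N U V}.
Arguments F4fix {R N}.
Arguments Flin {R N}.
Arguments phi_in_W {R N}.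
Arguments psi_phi {R N}.
Arguments phi_psi {R N}.
Arguments psym_psi {R N}.
Arguments sw {N}.
Arguments swK {N}.
Arguments sigmaE {R N}.
Arguments sigma_psym {R N}.
Arguments psym_lin {R N}.
Arguments sigma_lin {R N}.
Arguments phi_sum {R N}.
Arguments psi_sum {R N}.

Theorem theorem5 (R : rcfType) (N : nat) (G : Type) (mul : G -> G -> G)
  (one : G) (inv : G -> G) (r : G -> 'M[R[i]]_N) :
  (1 <= N)%N -> is_group mul one inv -> unitary_rep mul one r ->
  exists d : nat,
    dim_over (@real_complex_def R (Phant R)) (invariant_potentials r) d /\
    singlet_count r d.
Proof.
move=> _ [_ _ _ _ hGV] [hM h1 hU].
have hinv g i a : r (inv g) i a = (r g a i)^*.
  have e : r (inv g) = (map_mx (fun x => x^*) (r g))^T.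
    by rewrite -[LHS]mul1mx -(hU g) -mulmxA -hM hGV h1 mulmx1.
  by rewrite e !mxE.
have [d [e [eS eI eP]]] := @real_basis R _ (invariant_potentials r).
have eps t : psym (e t) by case: (eS t) => /pot_iff [].
have ehe t : herm (e t) by case: (eS t) => /pot_iff [].
have efx t g : coeffs_fixed (r g) (e t) by case: (eS t).
exists d; split; first by exists e; split.
exists (fun t => phi (e t)); split.
- move=> t; split; first exact: phi_in_W.
  by move=> g x; exact: (F1fix (hinv g) (e t) (efx t (inv g)) x).
- move=> a ha.
  have c0 y : \sum_(t < d) a t * e t y = 0.
    transitivity (psi (fun x => \sum_(t < d) a t * phi (e t) x) y).
      by rewrite psi_sum; apply: eq_bigr => t _; rewrite psi_phi.
    have -> : (fun x => \sum_(t < d) a t * phi (e t) x) = (fun _ => 0).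
      apply: functional_extensionality => x; exact: (ha x).
    by case: y => [[i j]|[[[i j] k] l]] //=; rewrite addr0 mul0r.
  have c1 y : \sum_(t < d) (a t)^* * e t y = 0.
    have := c0 (sw y); move/(congr1 (fun z => z^*)); rewrite rmorph_sum rmorph0 => hh.
    apply: etrans _ hh; apply: eq_bigr => t _; by rewrite rmorphM /= -(ehe t y) sigmaE.
  have hre : forall t, complex.Re (a t) = 0.
    apply: eI => y.
    transitivity ((\sum_(t < d) a t * e t y + \sum_(t < d) (a t)^* * e t y) / 2).
      rewrite -big_split mulr_suml; apply: eq_bigr => t _ /=.
      rewrite ReJ_add; change (conjc (a t)) with ((a t)^*); ring.
    by rewrite c0 c1 addr0 mul0r.
  have him : forall t, complex.Im (a t) = 0.
    apply: eI => y.
    transitivity ((\sum_(t < d) (a t)^* * e t y - \sum_(t < d) a t * e t y) / 2 * 'i%C).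
      rewrite -sumrB !mulr_suml; apply: eq_bigr => t _ /=.
      rewrite ImJ_sub; change (conjc (a t)) with ((a t)^*); ring.
    by rewrite c0 c1 subr0 !mul0r.
  move=> t; rewrite [a t]complexE hre him /=.
  by apply/eqP; rewrite eq_complex /= !mul0r !mulr0 subr0 !addr0 !eqxx.
- move=> w [wW wf].
  pose v := psi w.
  have psv : psym v by apply: psym_psi.
  have fv g : coeffs_fixed (r g) v by apply: (F3fix (hinv g)); apply: wf.
  pose s := sigma v.
  have pss : psym s by apply: sigma_psym.
  have fs g : coeffs_fixed (r g) s by apply: F4fix.
  have sv y : sigma s y = v y by rewrite sigmaE /s sigmaE swK conjCK.
  pose h : R[i] := 2^-1.
  pose ci : R[i] := 2^-1 * 'i%C.
  have hc : h^* = h by rewrite /h fmorphV /= conjC_nat.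
  have cic : ci^* = - ci.
    rewrite /ci rmorphM fmorphV /= conjC_nat.
    have -> : ('i%C : R[i])^* = - 'i%C by apply/eqP; rewrite eq_complex /= oppr0 !eqxx.
    by rewrite mulrN.
  pose v1 := fun y => h * v y + h * s y.
  pose v2 := fun y => ci * s y + (- ci) * v y.
  have iv1 : invariant_potentials r v1.
    split; last by move=> g; apply: Flin.
    apply/pot_iff; split; first exact: psym_lin.
    by move=> y; rewrite sigma_lin hc sv /s /v1 addrC.
  have iv2 : invariant_potentials r v2.
    split; last by move=> g; apply: Flin.
    apply/pot_iff; split; first exact: psym_lin.
    by move=> y; rewrite sigma_lin sv rmorphN /= cic opprK /s /v2 addrC.
  have [al hal] := eP _ iv1.
  have [be hbe] := eP _ iv2.
  exists (fun t => real_complex R (al t) + 'i%C * real_complex R (be t)) => x.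
  have ii : ('i%C : R[i]) * 'i%C = -1 by rewrite -expr2 sqr_i.
  have vE y : v y = \sum_(t < d) (real_complex R (al t) + 'i%C * real_complex R (be t)) * e t y.
    transitivity (v1 y + 'i%C * v2 y).
      rewrite /v1 /v2 /h /ci.
      transitivity (2^-1 * v y + 2^-1 * s y + ('i%C * 'i%C) * (2^-1 * s y) - ('i%C * 'i%C) * (2^-1 * v y)).
        by rewrite ii; field.
      ring.
    rewrite hal hbe mulr_sumr -big_split; apply: eq_bigr => t _ /=; ring.
  rewrite -(phi_psi w wW x) -/v.
  have -> : v = (fun y => \sum_(t < d) (real_complex R (al t) + 'i%C * real_complex R (be t)) * e t y).
    by apply: functional_extensionality.
  by rewrite phi_sum.
Qed.
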